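(* Let $r,t,\ell,m$ be integers with $1 \le r \le \ell \le m$ and $1 \le t < \ell$. Then $$\hat{\mathfrak w}_r(t;\ell,m) = A(r,t)-A(r,t-1)+ q^{m-1}\mu_{t-1}(\ell-1,m),$$ where for $0\le s<\ell$, $$A(r,s):=q^{s}\, \hat{\mathfrak w}_{r-1}(s;\ell-1,m-1)+q^{s-1}\bigl(\mu_s(\ell-1, m)-\mu_s(\ell-1,m-1)\bigr).$$
   Context: $q$ is a prime power. For nonnegative integers $a,b,t$, $\mu_t(a,b)$ denotes the number of $a\times b$ matrices over $\mathbb{F}_q$ of rank exactly $t$ (so $\mu_0(a,b)=1$ and $\mu_t(a,b)=0$ if $t>\min(a,b)$). For an $a\times b$ matrix $M=(m_{ij})$ and $0\le r\le a$, $\tau_r(M)=m_{11}+\cdots+m_{rr}$, with $\tau_0=0$. For $0\le r\le a$ and $t\ge 0$, $\mathfrak w_r(t;a,b)$ is the number of $a\times b$ matrices $M$ over $\mathbb{F}_q$ of rank exactly $t$ with $\tau_r(M)\ne 0$ (so $\mathfrak w_0(t;a,b)=0$ and $\mathfrak w_r(0;a,b)=0$), and $\hat{\mathfrak w}_r(t;a,b)=\mathfrak w_r(t;a,b)/(q-1)$. *)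

(* Defs.v *)
(* The field F_q is modelled as an arbitrary finite field F;
   q := #|F| (finite fields are exactly the F_q with q a prime power). *)
From HB Require Import structures.
From mathcomp Require Import all_boot all_order all_algebra all_field.
Set Implicit Arguments. Unset Strict Implicit. Unset Printing Implicit Defensive.
Import Order.TTheory GRing.Theory Num.Theory.
Local Open Scope ring_scope.

Definition mu (F : finFieldType) (t a b : nat) : nat :=
  #|[set M : 'M[F]_(a, b) | \rank M == t]|.

(* tau_r(M) = m_11 + ... + m_rr (0-indexed: entries (i,i) with i < r) *)
Definition tau (F : finFieldType) (a b : nat) (r : nat) (M : 'M[F]_(a, b)) : F :=
  \sum_(i < a) \sum_(j < b | ((i : nat) == j) && (i < r)%N) M i j.

Definition w (F : finFieldType) (r t a b : nat) : nat :=
  #|[set M : 'M[F]_(a, b) | (\rank M == t) && (tau r M != 0)]|.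

Definition what (F : finFieldType) (r t a b : nat) : rat :=
  (w F r t a b)%:R / ((#|F|)%:R - 1).

(* A(r,s) = q^s hat w_{r-1}(s;l-1,m-1) + q^(s-1) (mu_s(l-1,m) - mu_s(l-1,m-1)),
   computed in rat; q^(s-1) is an integer power (so q^(-1) when s = 0). *)
Definition A_rs (F : finFieldType) (l m r s : nat) : rat :=
  (#|F|%:R : rat) ^+ s * what F r.-1 s l.-1 m.-1
  + (#|F|%:R : rat) ^ (s%:Z - 1)
    * ((mu F s l.-1 m)%:R - (mu F s l.-1 m.-1)%:R).

(* Main.v *)
Require Import Defs.
From HB Require Import structures.
From mathcomp Require Import all_boot all_order all_algebra all_field.
From mathcomp Require Import ring.
Set Implicit Arguments. Unset Strict Implicit. Unset Printing Implicit Defensive.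
Import Order.TTheory GRing.Theory Num.Theory.
Local Open Scope ring_scope.

Section Rank.
Variable F : finFieldType.

Lemma rank_addrow m n (A : 'M[F]_(m, n)) (r : 'rV_n) :
  \rank (col_mx r A) = (\rank A + ~~ (r <= A)%MS)%N.
Proof.
rewrite -addsmxE.
have [rA|nrA] := boolP (r <= A)%MS.
  by rewrite addn0 (addsmx_idPr rA).
have := mxrank_sum_cap r A.
have r0 : r != 0 by apply: contra nrA => /eqP ->; rewrite sub0mx.
rewrite rank_rV r0.
suff -> : \rank (r :&: A)%MS = 0%N by rewrite addn0 addnC => ->.
apply/eqP; rewrite mxrank_eq0; apply/eqP.
have := mxrankS (capmxSl r A); rewrite rank_rV r0.
rewrite leq_eqVlt ltnS leqn0 mxrank_eq0 => /orP[/eqP h|/eqP //].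
exfalso; move/negP: nrA; apply.
have : (r <= r :&: A)%MS.
  by rewrite -(mxrank_leqif_sup (capmxSl r A)) h rank_rV r0.
by rewrite sub_capmx => /andP[].
Qed.


Lemma rank_addcol m n (A : 'M[F]_(m, n)) (v : 'cV_m) :
  \rank (row_mx v A) = (\rank A + ~~ (v^T <= A^T)%MS)%N.
Proof. by rewrite -mxrank_tr tr_row_mx rank_addrow mxrank_tr. Qed.

Definition cf n k (N : 'M[F]_(n, k)) (u : 'rV_k) (v : 'cV_n) : 'M[F]_1 :=
  u *m pinvmx N *m v.

Lemma sub_rowblock n k (a : 'M[F]_1) (u : 'rV_k) (v : 'cV_n) (N : 'M_(n, k)) :
  (v^T <= N^T)%MS ->
  (row_mx a u <= row_mx v N)%MS = (u <= N)%MS && (a == cf N u v).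
Proof.
move=> /submxP[z hz].
have hv : v = N *m z^T by rewrite -[v]trmxK hz trmx_mul trmxK.
apply/idP/andP.
  move=> /submxP[y]; rewrite mul_mx_row => /eq_row_mx[ha hu].
  split; first by rewrite hu submxMl.
  have uN : (u <= N)%MS by rewrite hu submxMl.
  by rewrite /cf hv mulmxA (mulmxKpV uN) ha hv mulmxA -hu.
move=> [uN /eqP ->]; apply/submxP; exists (u *m pinvmx N).
by rewrite mul_mx_row (mulmxKpV uN).
Qed.

Lemma rank_block n k (a : 'M[F]_1) (u : 'rV_k) (v : 'cV_n) (N : 'M_(n, k)) :
  \rank (block_mx a u v N) = (\rank N +
    if (v^T <= N^T)%MS then (if (u <= N)%MS then (a != cf N u v : nat) else 1)
    else (~~ (u <= N)%MS).+1)%N.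
Proof.
have [hv|hv] := boolP (v^T <= N^T)%MS.
  rewrite /block_mx rank_addrow rank_addcol hv addn0 sub_rowblock //.
  by case: (u <= N)%MS.
rewrite -mxrank_tr tr_block_mx /block_mx rank_addrow rank_addcol trmxK.
have -> : (row_mx a^T v^T <= row_mx u^T N^T)%MS = false.
  apply/negP => /submxP[y]; rewrite mul_mx_row => /eq_row_mx[_ h].
  by move/negP: hv; apply; rewrite h submxMl.
by rewrite !trmxK mxrank_tr addn1 addnS.
Qed.


Local Notation q := #|F|.

Lemma card_rowsp n k (N : 'M[F]_(n, k)) :
  #|[set u : 'rV_k | (u <= N)%MS]| = (q ^ \rank N)%N.
Proof.
rewrite -[\rank N]mul1n -card_mx.
have injA: injective (mulmxr (row_base N)).
  have /row_freeP[A' A'K] := row_base_free N.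
  by move=> ?; apply: can_inj (mulmxr A') _ => u; rewrite /= -mulmxA A'K mulmx1.
rewrite -(card_image (injA _)); apply: eq_card => v.
by rewrite inE -(eq_row_base N) (sameP submxP codomP).
Qed.

Lemma card_colsp n k (N : 'M[F]_(n, k)) :
  #|[set v : 'cV_n | (v^T <= N^T)%MS]| = (q ^ \rank N)%N.
Proof.
rewrite -mxrank_tr -card_rowsp -(card_imset _ (@trmx_inj _ _ _)).
apply: eq_card => v; rewrite !inE; apply/imsetP/idP.
  by move=> [u]; rewrite inE => h ->.
by move=> h; exists v^T; rewrite ?inE ?trmxK.
Qed.

Definition fib s (y : 'rV[F]_s) (d : F) := [set z : 'cV_s | (y *m z) 0 0 == d].

Lemma fib_le s (y : 'rV[F]_s) d e : y != 0 -> (#|fib y d| <= #|fib y e|)%N.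
Proof.
move=> y0.
have [j hj] : exists j, y 0 j != 0.
  case: (pickP (fun j => y 0 j != 0)) => [j hj|h]; first by exists j.
  by case/eqP: y0; apply/matrixP => i j; rewrite ord1 mxE; move: (h j) => /negbFE/eqP.
pose z0 : 'cV_s := \col_i (if i == j then (y 0 j)^-1 else 0).
have hz0 : (y *m z0) 0 0 = 1.
  rewrite mxE (bigD1 j) //= big1 => [|i /negbTE hi]; last by rewrite mxE hi mulr0.
  by rewrite mxE eqxx addr0 mulfV.
have inj : injective (fun z : 'cV_s => z + (e - d) *: z0) by move=> a b /addIr.
rewrite -(card_imset _ inj); apply: subset_leq_card; apply/subsetP => z.
move/imsetP => [z1]; rewrite !inE => /eqP h1 ->.
by rewrite mulmxDr -scalemxAr [X in X == _]mxE [X in _ + X]mxE h1 hz0 mulr1 addrC subrK.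
Qed.

Lemma fib_card s (y : 'rV[F]_s) d : y != 0 -> #|fib y d| = (q ^ s.-1)%N.
Proof.
move=> y0.
have eqc e : #|fib y e| = #|fib y d|.
  by apply/eqP; rewrite eqn_leq !fib_le.
have tot : (\sum_(e : F) #|fib y e| = q ^ s)%N.
  rewrite -[s in (_ ^ s)%N]muln1 -card_mx -sum1_card.
  rewrite (partition_big (fun z : 'cV_s => (y *m z) 0 0) predT) //=.
  by apply: eq_bigr => e _; rewrite -sum1dep_card.
move: tot; under eq_bigr do rewrite eqc.
rewrite sum_nat_const.
clear eqc; case: s y y0 => [|s] y y0.
  by case/eqP: y0; apply/matrixP => i [].
rewrite expnS => /eqP; rewrite eqn_pmul2l //.
  by move/eqP.
by apply: (leq_trans _ (card_finNzRing_gt1 F)).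
Qed.


Lemma dot_count s d :
  (\sum_(y : 'rV[F]_s) #|fib y d| = (d == 0%R) * q ^ s + (q ^ s - 1) * q ^ s.-1)%N.
Proof.
rewrite (bigD1 0) //=; congr (_ + _)%N.
  have [->|hd] := eqVneq d 0.
    rewrite mul1n -[s in (_ ^ s)%N]muln1 -card_mx; apply: eq_card => z.
    by rewrite !inE mul0mx mxE eqxx.
  rewrite mul0n; apply/eqP; rewrite cards_eq0; apply/eqP/setP => z.
  by rewrite !inE mul0mx mxE eq_sym (negbTE hd).
rewrite (eq_bigr (fun _ => q ^ s.-1)%N); last by move=> y; apply: fib_card.
by rewrite sum_nat_const cardC1 card_mx mul1n subn1.
Qed.


Lemma cf_count n k (N : 'M[F]_(n, k)) d :
  (\sum_(u | (u <= N)%MS)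
      #|[set v : 'cV_n | (v^T <= N^T)%MS && ((cf N u v) 0 0 == d)%R]|
   = \sum_(y : 'rV_(\rank N)) #|fib y d|)%N.
Proof.
have /row_freeP[R' RR'] := row_base_free N.
have /row_fullP[B BC] := col_base_full N.
have NCR := mulmx_base N.
have injR : injective (fun y : 'rV_(\rank N) => y *m row_base N).
  move=> a b h; have {}h : a *m row_base N = b *m row_base N := h.
  by rewrite -[a]mulmx1 -[b]mulmx1 -RR' (mulmxA a) (mulmxA b) h.
have injC : injective (fun z : 'cV_(\rank N) => col_base N *m z).
  move=> a b h; have {}h : col_base N *m a = col_base N *m b := h.
  by rewrite -[a]mul1mx -[b]mul1mx -BC -(mulmxA B _ a) -(mulmxA B _ b) h.
have CN z : col_base N *m z = N *m (R' *m z).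
  have h1 : col_base N *m row_base N *m (R' *m z) = N *m (R' *m z) by rewrite NCR.
  rewrite -h1 -mulmxA (mulmxA (row_base N) R') RR' mul1mx.
  by [].
have cfE y z : cf N (y *m row_base N) (col_base N *m z) = y *m z.
  have yN : (y *m row_base N <= N)%MS by rewrite -(eq_row_base N) submxMl.
  by rewrite /cf CN mulmxA (mulmxKpV yN) -mulmxA (mulmxA _ R') RR' mul1mx.
rewrite (eq_bigl (mem [set y *m row_base N | y in [set: 'rV_(\rank N)]])); last first.
  move=> u /=; apply/idP/imsetP.
    by rewrite -(eq_row_base N) => /submxP[y ->]; exists y; rewrite ?inE.
  by move=> [y _ ->]; rewrite -(eq_row_base N) submxMl.
rewrite big_imset /=; last by move=> a b _ _; apply: injR.
apply: eq_big => [y|y _]; first by rewrite inE.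
rewrite -(card_imset (fib y d) injC); apply: eq_card => v; rewrite [in LHS]inE.
apply/andP/imsetP.
  move=> [/submxP[w hw] hc].
  have hv : v = col_base N *m (row_base N *m w^T).
    by rewrite mulmxA NCR -[v]trmxK hw trmx_mul trmxK.
  exists (row_base N *m w^T) => //.
  by rewrite inE -cfE -hv.
move=> [z]; rewrite inE => hz ->; split; last by rewrite cfE.
by rewrite CN trmx_mul submxMl.
Qed.


Local Notation Q := (#|F|%:R : rat).

Lemma sum_block n k (g : 'M[F]_(1 + n, 1 + k) -> rat) :
  \sum_M g M = \sum_(N : 'M_(n, k)) \sum_(u : 'rV_k) \sum_(v : 'cV_n)
                 \sum_(a : 'M_1) g (block_mx a u v N).
Proof.
rewrite (reindex (fun p : 'M[F]_(n, k) * ('rV_k * ('cV_n * 'M_1)) =>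
                    block_mx p.2.2.2 p.2.1 p.2.2.1 p.1)) /=; last first.
  apply: onW_bij.
  exists (fun M => (drsubmx M, (ursubmx M, (dlsubmx M, ulsubmx M)))).
    by move=> [N [u [v a]]]; rewrite /= block_mxKdr block_mxKur block_mxKdl block_mxKul.
  by move=> M /=; rewrite submxK.
under [RHS]eq_bigr => N _ do under eq_bigr => u _ do rewrite pair_bigA.
under [RHS]eq_bigr => N _ do rewrite pair_bigA.
by rewrite pair_bigA.
Qed.

Lemma sum_rowmx n k (g : 'M[F]_(n, 1 + k) -> rat) :
  \sum_M g M = \sum_(N : 'M_(n, k)) \sum_(v : 'cV_n) g (row_mx v N).
Proof.
rewrite (reindex (fun p : 'M[F]_(n, k) * 'cV_n => row_mx p.2 p.1)) /=; last first.
  apply: onW_bij.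
  exists (fun M => (rsubmx M, lsubmx M)).
    by move=> [N v]; rewrite /= row_mxKr row_mxKl.
  by move=> M /=; rewrite hsubmxK.
by rewrite pair_bigA.
Qed.

Lemma sum_M1 (g : 'M[F]_1 -> rat) : \sum_a g a = \sum_(x : F) g x%:M.
Proof.
rewrite (reindex (fun x : F => x%:M)) //.
apply: onW_bij; exists (fun a : 'M_1 => a 0 0).
  by move=> x; rewrite mxE eqxx mulr1n.
by move=> a; apply/matrixP => i j; rewrite !ord1 mxE eqxx mulr1n.
Qed.

Lemma sum_const_pred (T : finType) (P : pred T) (c : rat) :
  \sum_(i | P i) c = c * #|[set i | P i]|%:R.
Proof.
by rewrite -sum1dep_card natr_sum mulr_sumr; apply: eq_bigr => *; rewrite mulr1.
Qed.

Lemma card_predC (T : finType) (P : pred T) :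
  (#|[set i | ~~ P i]|%:R : rat) = #|T|%:R - #|[set i | P i]|%:R.
Proof.
rewrite -(cardsC [set i | P i]) natrD addrC addKr; congr (_%:R).
by apply: eq_card => i; rewrite !inE.
Qed.

Lemma sum_neq (e : F) : \sum_(x : F) ((x != e)%:R : rat) = Q - 1.
Proof.
rewrite (bigD1 e) //= eqxx add0r.
rewrite (eq_bigr (fun _ => 1)) => [|x /negbTE ->] //.
rewrite sum_const_pred; set c := #|_|.
have : (c.+1 = #|F|)%N.
  rewrite /c -(cardsC [set i | i != e]) -addn1; congr (_ + _)%N.
  rewrite -(cards1 e); apply: eq_card => x; rewrite !inE negbK.
  by [].
by move=> <-; rewrite mul1r -addn1 natrD addrK.
Qed.


Lemma andR (a b : bool) : ((a && b)%:R : rat) = a%:R * b%:R.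
Proof. by case: a; case: b; rewrite ?mulr1 ?mulr0 ?mul0r. Qed.

Lemma sum_ne0 (tau0 : F) : \sum_(x : F) ((x + tau0 != 0)%:R : rat) = Q - 1.
Proof. by under eq_bigr do rewrite addr_eq0; rewrite sum_neq. Qed.

Lemma scalar1_eq (x y : F) : (x%:M == y%:M :> 'M[F]_1) = (x == y).
Proof.
apply/eqP/eqP => [/matrixP/(_ 0 0)|->] //.
by rewrite !mxE eqxx !mulr1n.
Qed.

Definition inner_val n k (N : 'M[F]_(n, k)) (u : 'rV_k) (v : 'cV_n) (t : nat) (tau0 : F) : rat :=
  (if (v^T <= N^T)%MS then
     (if (u <= N)%MS then
        (\rank N == t)%:R * (cf N u v 0 0 + tau0 != 0)%:R
        + ((\rank N).+1 == t)%:R * (Q - 1 - (cf N u v 0 0 + tau0 != 0)%:R)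
      else ((\rank N).+1 == t)%:R * (Q - 1))
   else (if (u <= N)%MS then ((\rank N).+1 == t)%:R * (Q - 1)
         else ((\rank N).+2 == t)%:R * (Q - 1))).

Lemma inner_sum n k (N : 'M[F]_(n, k)) (u : 'rV_k) (v : 'cV_n) (t : nat) (tau0 : F) :
  \sum_(a : 'M_1) ((\rank (block_mx a u v N) == t) && (a 0 0 + tau0 != 0))%:R =
  inner_val N u v t tau0.
Proof.
rewrite sum_M1 /inner_val.
under eq_bigr => x _ do rewrite rank_block mxE eqxx mulr1n andR.
have K (b : bool) : \sum_(x : F) ((b%:R : rat) * (x + tau0 != 0)%:R) = b%:R * (Q - 1).
  by rewrite -mulr_sumr sum_ne0.
have [hv|hv] := boolP (v^T <= N^T)%MS; have [hu|hu] := boolP (u <= N)%MS;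
  rewrite ?hv ?hu ?(negbTE hv) ?(negbTE hu) /= ?K ?addn1 ?addnS ?addn0 //.
set c := cf N u v 0 0.
have hc : cf N u v = c%:M.
  by apply/matrixP => i j; rewrite !ord1 [RHS]mxE eqxx mulr1n.
rewrite hc (bigD1 c) //= scalar1_eq eqxx addn0; congr (_ + _).
under eq_bigr => x hx do rewrite scalar1_eq hx addn1.
rewrite -mulr_sumr; congr (_ * _).
have := sum_ne0 tau0; rewrite (bigD1 c) //= => <-.
by rewrite addrC addrK.
Qed.


Lemma sum_ind (T : finType) (P B : pred T) :
  \sum_(i | P i) ((B i)%:R : rat) = #|[set i | P i && B i]|%:R.
Proof.
rewrite -sum1dep_card natr_sum big_mkcondr /=.
by apply: eq_bigr => i _; case: (B i).
Qed.

Lemma neqR (x y : F) : ((x + y != 0)%:R : rat) = 1 - (x == - y)%:R.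
Proof. by rewrite addr_eq0; case: (x == - y); rewrite ?subrr ?subr0. Qed.

Lemma cR n k (N : 'M[F]_(n, k)) :
  (#|[set u : 'rV_k | (u <= N)%MS]|%:R : rat) = Q ^+ \rank N.
Proof. by rewrite card_rowsp natrX. Qed.

Lemma cnR n k (N : 'M[F]_(n, k)) :
  (#|[set u : 'rV_k | ~~ (u <= N)%MS]|%:R : rat) = Q ^+ k - Q ^+ \rank N.
Proof. by rewrite card_predC cR card_mx mul1n natrX. Qed.

Lemma cC n k (N : 'M[F]_(n, k)) :
  (#|[set v : 'cV_n | (v^T <= N^T)%MS]|%:R : rat) = Q ^+ \rank N.
Proof. by rewrite card_colsp natrX. Qed.

Lemma cnC n k (N : 'M[F]_(n, k)) :
  (#|[set v : 'cV_n | ~~ (v^T <= N^T)%MS]|%:R : rat) = Q ^+ n - Q ^+ \rank N.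
Proof. by rewrite card_predC cC card_mx muln1 natrX. Qed.

Definition Pd (s : nat) (e : bool) : rat :=
  e%:R * Q ^+ s + (Q ^+ s - 1) * Q ^+ s.-1.

Lemma sumX n k (N : 'M[F]_(n, k)) (tau0 : F) :
  \sum_(u | (u <= N)%MS) \sum_(v | (v^T <= N^T)%MS)
     ((cf N u v 0 0 + tau0 != 0)%:R : rat)
  = Q ^+ \rank N * Q ^+ \rank N - Pd (\rank N) (tau0 == 0).
Proof.
under eq_bigr => u _ do under eq_bigr => v _ do rewrite neqR.
under eq_bigr => u _ do rewrite sumrB sum_const_pred cC mul1r sum_ind.
rewrite sumrB sum_const_pred cR -natr_sum.
rewrite (cf_count N (- tau0)) dot_count oppr_eq0 /Pd.
rewrite natrD !natrM natrB ?expn_gt0 ?(ltnW (card_finNzRing_gt1 F)) // !natrX.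
by case: (tau0 == 0).
Qed.


Definition Gf (s t n k : nat) (e : bool) : rat :=
  (s == t)%:R * (Q ^+ s * Q ^+ s - Pd s e)
  + (s.+1 == t)%:R * ((Q - 1) * (Q ^+ s * Q ^+ s) - (Q ^+ s * Q ^+ s - Pd s e)
       + (Q - 1) * (Q ^+ s * (Q ^+ n - Q ^+ s) + (Q ^+ k - Q ^+ s) * Q ^+ s))
  + (s.+2 == t)%:R * ((Q - 1) * (Q ^+ k - Q ^+ s) * (Q ^+ n - Q ^+ s)).

Lemma sum_cc (T1 T2 : finType) (P1 : pred T1) (P2 : pred T2) (c : rat) :
  \sum_(x | P1 x) \sum_(y | P2 y) c = c * #|[set x | P1 x]|%:R * #|[set y | P2 y]|%:R.
Proof.
under eq_bigr do rewrite sum_const_pred.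
by rewrite sum_const_pred mulrAC.
Qed.

Lemma cnt_N n k (N : 'M[F]_(n, k)) (t : nat) (tau0 : F) :
  \sum_(u : 'rV_k) \sum_(v : 'cV_n) \sum_(a : 'M_1)
     ((\rank (block_mx a u v N) == t) && (a 0 0 + tau0 != 0))%:R
  = Gf (\rank N) t n k (tau0 == 0).
Proof.
under eq_bigr => u _ do under eq_bigr => v _ do rewrite inner_sum.
set s := \rank N.
pose b u v : rat := (cf N u v 0 0 + tau0 != 0)%:R.
rewrite (bigID (fun u => (u <= N)%MS)) /=.
rewrite (eq_bigr (fun u : 'rV_k => \sum_(v : 'cV_n | (v^T <= N^T)%MS)
          ((s.+1 == t)%:R * (Q - 1) + ((s == t)%:R - (s.+1 == t)%:R) * b u v)
          + \sum_(v : 'cV_n | ~~ (v^T <= N^T)%MS) ((s.+1 == t)%:R * (Q - 1)))); last first.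
  move=> u hu; rewrite (bigID (fun v => (v^T <= N^T)%MS)) /=; congr (_ + _).
    apply: eq_bigr => v hv; rewrite /inner_val hu hv /b /s; ring.
  by apply: eq_bigr => v hv; rewrite /inner_val hu (negbTE hv).
rewrite [X in _ + X](eq_bigr (fun u : 'rV_k => \sum_(v : 'cV_n | (v^T <= N^T)%MS)
          ((s.+1 == t)%:R * (Q - 1))
          + \sum_(v : 'cV_n | ~~ (v^T <= N^T)%MS) ((s.+2 == t)%:R * (Q - 1)))); last first.
  move=> u hu; rewrite (bigID (fun v => (v^T <= N^T)%MS)) /=; congr (_ + _).
    by apply: eq_bigr => v hv; rewrite /inner_val (negbTE hu) hv.
  by apply: eq_bigr => v hv; rewrite /inner_val (negbTE hu) (negbTE hv).
rewrite !big_split /= !sum_cc.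
under eq_bigr do rewrite big_split /=.
rewrite big_split /= sum_cc.
under eq_bigr do rewrite -mulr_sumr.
rewrite -mulr_sumr /b sumX.
rewrite cR cC cnR cnC /Gf -/s.
ring.
Qed.


Lemma tau_block n k r (a : 'M[F]_1) (u : 'rV_k) (v : 'cV_n) (N : 'M_(n, k)) :
  (0 < r)%N -> tau r (block_mx a u v N) = a 0 0 + tau r.-1 N.
Proof.
move=> r0; rewrite /tau big_split_ord /= big_ord1.
congr (_ + _).
  rewrite big_split_ord /= big_pred0_eq addr0.
  by rewrite big_mkcond big_ord1 /= r0 block_mxEul.
apply: eq_bigr => i _.
rewrite big_split_ord /= big_pred0 ?add0r; last first.
  by move=> j; rewrite /= ord1.
apply: eq_big => j.
  rewrite /= !add1n eqSS.
  by case: r r0.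
by move=> _; rewrite block_mxEdr.
Qed.


Lemma card_sumR (T : finType) (P : pred T) :
  (#|[set x | P x]|%:R : rat) = \sum_x (P x)%:R.
Proof.
rewrite -sum1dep_card natr_sum big_mkcond /=.
by apply: eq_bigr => x _; case: (P x).
Qed.

Lemma w_block n k r t : (0 < r)%N ->
  ((w F r t n.+1 k.+1)%:R : rat) =
  \sum_(N : 'M[F]_(n, k)) Gf (\rank N) t n k (tau r.-1 N == 0).
Proof.
move=> r0; rewrite /w card_sumR.
rewrite (sum_block (fun M : 'M[F]_(1 + n, 1 + k) => ((\rank M == t) && (tau r M != 0))%:R)).
apply: eq_bigr => N _.
under eq_bigr do under eq_bigr do under eq_bigr do rewrite tau_block //.
exact: cnt_N.
Qed.

Lemma sum_rank_eq n k s (h : nat -> rat) :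
  \sum_(N : 'M[F]_(n, k)) (\rank N == s)%:R * h (\rank N) = h s * (mu F s n k)%:R.
Proof.
rewrite /mu card_sumR mulr_sumr; apply: eq_bigr => N _.
by case: eqP => [->|_]; rewrite ?mul1r ?mulr1 ?mul0r ?mulr0.
Qed.

Lemma sum_rank_e n k r s (h1 h2 : nat -> rat) :
  \sum_(N : 'M[F]_(n, k)) (\rank N == s)%:R * (h1 (\rank N) + h2 (\rank N) * (tau r N == 0)%:R)
  = h1 s * (mu F s n k)%:R + h2 s * ((mu F s n k)%:R - (w F r s n k)%:R).
Proof.
rewrite /mu /w !card_sumR -sumrB !mulr_sumr -big_split; apply: eq_bigr => N _ /=.
case: eqP => [->|_]; last by rewrite /= !mul0r !mulr0 addr0.
by case: (tau r N == 0); rewrite /= ?mul1r ?mulr1 ?mul0r ?mulr0; ring.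
Qed.

Lemma mu_rec n k s :
  ((mu F s n k.+1)%:R : rat) = Q ^+ s * (mu F s n k)%:R
    + (if s is s'.+1 then (Q ^+ n - Q ^+ s') * (mu F s' n k)%:R else 0).
Proof.
rewrite /mu card_sumR (sum_rowmx (fun M : 'M[F]_(n, 1 + k) => (\rank M == s)%:R)).
under eq_bigr => N _ do rewrite (bigID (fun v => (v^T <= N^T)%MS)) /=.
under eq_bigr => N _ do under eq_bigr => v hv do rewrite rank_addcol hv addn0.
under eq_bigr => N _ do under [X in _ + X]eq_bigr => v hv do rewrite rank_addcol hv addn1.
under eq_bigr => N _ do rewrite !sum_const_pred cC cnC.
rewrite big_split /=.
rewrite (eq_bigr (fun N => (\rank N == s)%:R * (fun x => Q ^+ x) (\rank N))) //.
rewrite (@sum_rank_eq n k s (fun x => Q ^+ x)) mulrC; congr (_ + _).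
case: s => [|s].
  by rewrite big1 // => N _; rewrite mul0r.
under eq_bigr => N _ do rewrite eqSS.
rewrite (eq_bigr (fun N => (\rank N == s)%:R * (fun x => Q ^+ n - Q ^+ x) (\rank N))) //.
by rewrite (@sum_rank_eq n k s (fun x => Q ^+ n - Q ^+ x)).
Qed.


Lemma w0 r n k : w F r 0 n k = 0%N.
Proof.
apply/eqP; rewrite cards_eq0; apply/eqP/setP => M; rewrite !inE.
apply/negbTE; apply/negP => /andP[/eqP h].
have -> : M = 0 by apply/eqP; rewrite -mxrank_eq0 h.
rewrite /tau big1 ?eqxx // => i _; rewrite big1 // => j _; by rewrite mxE.
Qed.

Definition a1 (s : nat) : rat := Q ^+ s * Q ^+ s - (Q ^+ s - 1) * Q ^+ s.-1.
Definition b1 (s : nat) : rat := - Q ^+ s.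
Definition a2 (n k s : nat) : rat :=
  (Q - 1) * (Q ^+ s * Q ^+ s) - (Q ^+ s * Q ^+ s - (Q ^+ s - 1) * Q ^+ s.-1)
       + (Q - 1) * (Q ^+ s * (Q ^+ n - Q ^+ s) + (Q ^+ k - Q ^+ s) * Q ^+ s).
Definition b2 (s : nat) : rat := Q ^+ s.
Definition a3 (n k s : nat) : rat := (Q - 1) * (Q ^+ k - Q ^+ s) * (Q ^+ n - Q ^+ s).

Lemma Gf_dec s t n k e :
  Gf s t n k e =
    (s == t)%:R * (a1 s + b1 s * e%:R)
  + (s.+1 == t)%:R * (a2 n k s + b2 s * e%:R)
  + (s.+2 == t)%:R * a3 n k s.
Proof. rewrite /Gf /Pd /a1 /b1 /a2 /b2 /a3; ring. Qed.

Lemma sum_w n k r t1 : (0 < r)%N ->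
  ((w F r t1.+1 n.+1 k.+1)%:R : rat) =
    a1 t1.+1 * (mu F t1.+1 n k)%:R + b1 t1.+1 * ((mu F t1.+1 n k)%:R - (w F r.-1 t1.+1 n k)%:R)
  + (a2 n k t1 * (mu F t1 n k)%:R + b2 t1 * ((mu F t1 n k)%:R - (w F r.-1 t1 n k)%:R))
  + (if t1 is t2.+1 then a3 n k t2 * (mu F t2 n k)%:R else 0).
Proof.
move=> r0; rewrite w_block //.
under eq_bigr do rewrite Gf_dec.
rewrite !big_split /= sum_rank_e.
under [X in _ + X + _]eq_bigr do rewrite eqSS.
rewrite sum_rank_e; congr (_ + _ + _).
under eq_bigr do rewrite eqSS.
case: t1 => [|t2].
  by rewrite big1 // => N _; rewrite mul0r.
under eq_bigr do rewrite eqSS.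
by rewrite (@sum_rank_eq n k t2 (a3 n k)).
Qed.

End Rank.

Unset Implicit Arguments.

Theorem mainTheorem3 (F : finFieldType) (r t l m : nat) :
  (1 <= r)%N -> (r <= l)%N -> (l <= m)%N -> (1 <= t)%N -> (t < l)%N ->
  what F r t l m =
    A_rs F l m r t - A_rs F l m r t.-1
    + (#|F|%:R : rat) ^+ m.-1 * (mu F t.-1 l.-1 m)%:R.
Proof.
move=> r1 rl lm t1 tl.
case: l rl lm tl => [|n] rl lm tl; first by rewrite leqn0 in rl; rewrite (eqP rl) in r1.
case: m lm => [|k] lm; first by [].
case: t t1 tl => [|t1] // _ tl.
rewrite /what /A_rs /= !mu_rec sum_w //.
have hQ : (#|F|%:R : rat) - 1 != 0.
  by rewrite subr_eq0 pnatr_eq1 neq_ltn card_finNzRing_gt1 orbT.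
rewrite /a1 /b1 /a2 /b2 /a3.
have zS (j : nat) : ((j.+1)%:Z - 1 = j%:Z)%R by rewrite intS addrC addKr.
case: t1 tl => [|t2] tl.
  rewrite /what w0 /= subrr expr0z.
  set z := (_ ^ (0%Z - 1)).
  rewrite !expr0 !expr1.
  field.
  exact: hQ.
rewrite /what !zS -!exprnP /= !exprS.
field.
exact: hQ.
Qed.
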